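(* Let $p\geq 2$ be an integer, $n=2^p-1$ and $s=3\cdot 2^{p-2}$. Then there exists a perfect code $C$ in the hypercube $Q_n$ such that no element of $C$ contains $1^s$ as a substring.
   Context: The $n$-cube $Q_n$ is the graph whose vertex set is the set $\mathbb{B}_n$ of binary strings of length $n$, two strings being adjacent if they differ in exactly one position; its graph distance is the Hamming distance. A perfect code in a graph $G$ is a set $C$ of vertices such that every vertex of $G$ lies in the closed neighbourhood $N[c]=\{v: d_G(c,v)\le 1\}$ of exactly one vertex $c\in C$ (equivalently, $C$ is a dominating set and any two distinct elements of $C$ are at distance at least $3$). $1^s$ denotes the string of $s$ consecutive 1's; a string $\bm{f}$ is a substring of $\bm{s}$ if $\bm{s}=\bm{x}\bm{f}\bm{y}$ for some (possibly empty) strings $\bm{x},\bm{y}$. *)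

(* Defs.v *)
From mathcomp Require Import all_boot.
Set Implicit Arguments. Unset Strict Implicit. Unset Printing Implicit Defensive.

(* Vertices of the n-cube Q_n: binary strings of length n. *)
Definition bstring (n : nat) := (n.-tuple bool).

(* Hamming distance = graph distance in Q_n. *)
Definition hamming (n : nat) (u v : bstring n) : nat :=
  count id [seq x.1 != x.2 | x <- zip (val u) (val v)].

Definition closed_nbhd (n : nat) (c : bstring n) : {set bstring n} :=
  [set v | hamming c v <= 1].

Definition perfect_code (n : nat) (C : {set bstring n}) : Prop :=
  forall v : bstring n, #|[set c in C | v \in closed_nbhd c]| = 1.

Definition substring (f s : seq bool) : bool := infix f s.

Definition ones (s : nat) : seq bool := nseq s true.

(* Main.v *)
Require Import Defs.
From Stdlib Require Import PeanoNat Lia.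
From mathcomp Require Import all_boot zify.
Set Implicit Arguments. Unset Strict Implicit.

Lemma expnP m n : expn m n = Nat.pow m n.
Proof. elim: n => // n IH; rewrite expnS IH /=; by rewrite mulnE. Qed.

Lemma lxor_lt a b k : a < Nat.pow 2 k -> b < Nat.pow 2 k -> Nat.lxor a b < Nat.pow 2 k.
Proof.
move=> Ha Hb.
have [->|Hz] := eqVneq a 0; first by rewrite Nat.lxor_0_l.
have [->|Hz'] := eqVneq b 0; first by rewrite Nat.lxor_0_r.
have [->|Hx] := eqVneq (Nat.lxor a b) 0.
  have : 0 < Nat.pow 2 k by lia. by [].
have H1 := Nat.log2_lxor a b.
have /(Nat.log2_lt_pow2 a k) Ha' : (0 < a)%coq_nat by lia.
have /(Nat.log2_lt_pow2 b k) Hb' : (0 < b)%coq_nat by lia.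
have /(Nat.log2_lt_pow2 (Nat.lxor a b) k) Hx' : (0 < Nat.lxor a b)%coq_nat by lia.
apply/ltP; apply/Hx'. move/ltP in Ha; move/ltP in Hb. have := proj1 Ha' Ha; have := proj1 Hb' Hb. lia.
Qed.

Fixpoint S (g : nat -> bool) (m : nat) : nat :=
  match m with 0 => 0 | m'.+1 => Nat.lxor (S g m') (if g m' then m'.+1 else 0) end.

Lemma S_ext g g' m : (forall i, i < m -> g i = g' i) -> S g m = S g' m.
Proof.
elim: m => //= m IH H; rewrite IH; last by move=> i Hi; apply: H; lia.
by rewrite H.
Qed.

Lemma S_flip g g' j m : j < m -> g' j = ~~ g j -> (forall i, i != j -> g' i = g i) ->
  S g' m = Nat.lxor (S g m) j.+1.
Proof.
move=> Hj Hgj Hne; elim: m Hj => // m IH Hj /=.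
have [Hjm|Hjm] := ltnP j m.
  rewrite IH // Hne; last by apply/eqP; lia.
  by rewrite !Nat.lxor_assoc (Nat.lxor_comm j.+1).
have Ejm : j = m by lia. subst j.
rewrite (@S_ext g' g); last by move=> i Hi; apply: Hne; apply/eqP; lia.
rewrite Hgj Nat.lxor_assoc; congr Nat.lxor.
by case: (g m) => /=; rewrite ?Nat.lxor_nilpotent ?Nat.lxor_0_l.
Qed.

Lemma S_lt g m k : m < Nat.pow 2 k -> S g m < Nat.pow 2 k.
Proof.
elim: m => /= [|m IH] H; first lia.
apply: lxor_lt; first by apply: IH; lia.
by case: (g m) => //; lia.
Qed.
Definition flip n (j : nat) (v : bstring n) : bstring n :=
  [tuple (tnth v i) (+) (i == j :> nat) | i < n].

Lemma nth_flip n j (v : bstring n) i : i < n ->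
  nth false (flip j v) i = nth false v i (+) (i == j).
Proof.
move=> Hi; have -> : i = Ordinal Hi by [].
by rewrite nth_mktuple (tnth_nth false).
Qed.

Lemma hammingE n (u v : bstring n) :
  hamming u v = count (fun i => nth false u i != nth false v i) (iota 0 n).
Proof.
rewrite /hamming.
have -> : [seq x.1 != x.2 | x <- zip (val u) (val v)] =
          [seq nth false u i != nth false v i | i <- iota 0 n].
  apply: (@eq_from_nth _ false).
    by rewrite !size_map size_zip size_iota !size_tuple minnn.
  move=> i; rewrite !size_map size_zip !size_tuple minnn => Hi.
  rewrite (nth_map (false, false)) ?size_zip ?size_tuple ?minnn //.
  by rewrite (nth_map 0) ?size_iota // nth_zip ?size_tuple // nth_iota.
by rewrite count_map.
Qed.

Lemma ham_le1 n (u v : bstring n) : hamming u v <= 1 ->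
  u = v \/ exists2 j, j < n & u = flip j v.
Proof.
rewrite hammingE; set P := (fun i => _).
have [H0|H1] := eqVneq (count P (iota 0 n)) 0.
  move=> _; left; apply: val_inj; apply: (@eq_from_nth _ false); first by rewrite !size_tuple.
  move=> i; rewrite size_tuple => Hi.
  move: H0; rewrite -size_filter => /eqP; rewrite size_eq0 => /eqP Hf.
  have : i \notin filter P (iota 0 n) by rewrite Hf.
  rewrite mem_filter mem_iota /= Hi andbT /P. by move/negPn/eqP.
move=> Hle; right.
have : size (filter P (iota 0 n)) = 1 by rewrite size_filter; lia.
case E: (filter P (iota 0 n)) => [|j [|? ?]] //= _.
have : j \in filter P (iota 0 n) by rewrite E inE.
rewrite mem_filter mem_iota /= => /andP[Pj Hj].
exists j; first lia.
apply: val_inj; apply: (@eq_from_nth _ false); first by rewrite !size_tuple.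
move=> i; rewrite size_tuple => Hi; rewrite nth_flip //.
have [->|Hij] := eqVneq i j.
  by move: Pj; rewrite /P; case: (nth false u j); case: (nth false v j).
have : i \notin filter P (iota 0 n) by rewrite E inE.
rewrite mem_filter mem_iota /= Hi andbT /P addbF. by move/negPn/eqP.
Qed.

Lemma ham_flip n j (v : bstring n) : hamming (flip j v) v <= 1.
Proof.
rewrite hammingE.
apply: (@leq_trans (count (pred1 j) (iota 0 n))).
  apply: sub_count => i /=.
  have [Hi|Hi] := ltnP i n.
    rewrite nth_flip //. by case: (i == j); case: (nth false v i).
  by rewrite !nth_default ?size_tuple ?card_ord.
have := count_uniq_mem j (iota_uniq 0 n); rewrite /= => ->; by case: (j \in _).
Qed.

Lemma ham_refl n (v : bstring n) : hamming v v <= 1.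
Proof. by rewrite hammingE (@eq_count _ _ pred0) ?count_pred0 // => i; rewrite eqxx. Qed.
Definition hb k x := xorb (Nat.testbit x k.+1) (Nat.testbit x k).

Lemma hb_lxor k a b : hb k (Nat.lxor a b) = xorb (hb k a) (hb k b).
Proof.
rewrite /hb !Nat.lxor_spec.
by case: (Nat.testbit a k.+1); case: (Nat.testbit a k); case: (Nat.testbit b k.+1); case: (Nat.testbit b k).
Qed.

Lemma hb_val k x : x < 4 * 2 ^ k -> hb k x = (2 ^ k <= x < 3 * 2 ^ k).
Proof.
rewrite expnP /hb => Hx.
set q := Nat.pow 2 k in Hx *.
have Hq : q <> 0 by apply: Nat.pow_nonzero.
have E0 : Nat.testbit (x / q) 0 = Nat.testbit x k by rewrite Nat.div_pow2_bits.
have E1 : Nat.testbit (x / q) 1 = Nat.testbit x k.+1 by rewrite Nat.div_pow2_bits.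
rewrite -E0 -E1.
have Hd : (x / q < 4)%coq_nat by apply: Nat.div_lt_upper_bound => //; lia.
have Ex := Nat.div_mod x q Hq.
have Hr := Nat.mod_upper_bound x q Hq.
move: Ex Hr Hd; set d := x / q; set r := x mod q => Ex Hr Hd.
have Hq0 : 0 < q by lia.
case: d Ex Hd => [|[|[|[|d]]]] Ex Hd /=; try lia.
all: symmetry; first [apply/andP; split; lia | apply/negbTE/negP => /andP[]; lia].
Qed.

Lemma hb_S k g m : hb k (S g m.+1) = xorb (hb k (S g m)) (g m && hb k m.+1).
Proof. rewrite /= hb_lxor; case: (g m) => /=; first reflexivity. by rewrite /hb !Nat.bits_0. Qed.

Lemma hb_window k (g : nat -> bool) i0 : i0 + 3 * 2 ^ k <= 4 * 2 ^ k - 1 ->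
  (forall i, i0 <= i < i0 + 3 * 2 ^ k -> g i) ->
  forall m, m <= 4 * 2 ^ k - 1 ->
  hb k (S g m) = odd (minn m (3 * 2 ^ k - 1) - (2 ^ k - 1)).
Proof.
move=> Hi0 Hg; have Hq : 0 < 2 ^ k by rewrite expn_gt0.
elim=> [|m IH] Hm.
  rewrite /= /hb !Nat.bits_0; by have -> : minn 0 (3 * 2 ^ k - 1) - (2 ^ k - 1) = 0 by lia.
rewrite hb_S IH; last lia.
have -> : g m && hb k m.+1 = (2 ^ k - 1 <= m < 3 * 2 ^ k - 1).
  rewrite hb_val; last lia.
  case Hc: (2 ^ k - 1 <= m < 3 * 2 ^ k - 1).
    rewrite Hg; last lia. apply/andP; split; lia.
  apply/negbTE/negP => /andP[_ /andP[H1 H2]]; move/negbT: Hc => /negP; apply; apply/andP; split; lia.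
case Hc: (2 ^ k - 1 <= m < 3 * 2 ^ k - 1).
  have -> : minn m.+1 (3 * 2 ^ k - 1) - (2 ^ k - 1) = (minn m (3 * 2 ^ k - 1) - (2 ^ k - 1)).+1 by lia.
  by rewrite oddS; case: (odd _).
have -> : minn m.+1 (3 * 2 ^ k - 1) - (2 ^ k - 1) = minn m (3 * 2 ^ k - 1) - (2 ^ k - 1) by lia.
by case: (odd _).
Qed.

Lemma S_flipv n j (v : bstring n) : j < n ->
  S (fun i => nth false (flip j v) i) n = Nat.lxor (S (fun i => nth false v i) n) j.+1.
Proof.
move=> Hj; apply: S_flip => //.
  by rewrite nth_flip // eqxx addbT.
move=> i Hij; have [Hi|Hi] := ltnP i n.
  by rewrite nth_flip // (negbTE Hij) addbF.
by rewrite !nth_default ?size_tuple ?card_ord.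
Qed.

Theorem theorem2 (p : nat) (hp : 2 <= p) :
  exists C : {set bstring (2 ^ p - 1)},
    perfect_code C /\
    forall c, c \in C -> ~~ substring (ones (3 * 2 ^ (p - 2))) (val c).
Proof.
have [k Ep] : exists k, p = k.+2 by exists (p - 2); lia.
subst p. have -> : k.+2 - 2 = k by lia.
have E4 : 2 ^ k.+2 = 4 * 2 ^ k by rewrite !expnS mulnA.
have Hq : 0 < 2 ^ k by rewrite expn_gt0.
set n := 2 ^ k.+2 - 1.
have Hn : n = 4 * 2 ^ k - 1 by rewrite /n E4.
exists [set c : bstring n | S (fun i => nth false c i) n == 2 ^ k]; split.
  move=> v; apply/eqP/cards1P.
  set Sv := S (fun i => nth false v i) n.
  set t := Nat.lxor Sv (2 ^ k).
  have HSv : Sv < Nat.pow 2 k.+2 by apply: S_lt; rewrite -expnP; lia.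
  have Ht : t < Nat.pow 2 k.+2 by apply: lxor_lt => //; rewrite -expnP; lia.
  exists (if t == 0 then v else flip t.-1 v).
  apply/setP => c; rewrite !inE /closed_nbhd.
  apply/idP/idP.
    move=> /andP[/eqP HS /ham_le1 [Ecv|[j Hj Ecj]]]; subst c.
      have -> : t = 0 by rewrite /t /Sv HS Nat.lxor_nilpotent.
      by rewrite eqxx.
    rewrite S_flipv // -/Sv in HS.
    have -> : t = j.+1 by rewrite /t -HS -Nat.lxor_assoc Nat.lxor_nilpotent Nat.lxor_0_l.
    by [].
  move=> /eqP ->; case: (eqVneq t 0) => Ht0.
    rewrite ham_refl andbT; apply/eqP; apply: Nat.lxor_eq; exact: Ht0.
  rewrite ham_flip andbT S_flipv; last by rewrite -expnP in Ht; lia.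
  have -> : (t.-1).+1 = t by lia.
  by rewrite /t -/Sv -Nat.lxor_assoc Nat.lxor_nilpotent Nat.lxor_0_l.
move=> c; rewrite inE => /eqP HS; apply/negP => /infixP [s1 [s2 Ec]].
have Hsz : size s1 + 3 * 2 ^ k + size s2 = n.
  by rewrite -(size_tuple c) Ec !size_cat size_nseq addnA.
have Hg : forall i, size s1 <= i < size s1 + 3 * 2 ^ k -> nth false c i.
  move=> i /andP[H1 H2]; rewrite Ec nth_cat ltnNge H1 /= nth_cat size_nseq.
  have Hlt : i - size s1 < 3 * 2 ^ k by lia.
  by rewrite /ones Hlt nth_nseq Hlt.
have := hb_window (g := fun i => nth false c i) _ Hg (m := n).
rewrite -Hn HS => /(_ _ (leqnn _)).
rewrite hb_val; last lia.
have -> : minn n (3 * 2 ^ k - 1) - (2 ^ k - 1) = (2 ^ k).*2 by lia.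
rewrite odd_double.
have -> : (2 ^ k <= 2 ^ k < 3 * 2 ^ k) = true by apply/andP; split; lia.
by move=> H; have := H ltac:(lia).
Qed.
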